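(* Let $A$ be a non-abelian subalgebra of the matrix metabelian Lie algebra $M_{I,\Lambda}$. Then $\mathrm{Fit}(A)=\{(f,u)\in A : f=0\}$.
   Context: For sets $I,\Lambda$ and a field $k$, let $R=k[x_\alpha:\alpha\in\Lambda]$ and $T$ the free $R$-module with basis $\{u_i:i\in I\}$. $M_{I,\Lambda}$ is the set of pairs $(f,u)$, $f\in R$, $u\in T$ (matrices $\begin{pmatrix} f&u\\0&0\end{pmatrix}$), with componentwise addition and scalar multiplication and product $(f,u)\circ(g,v)=(0,ug-vf)$; it is a metabelian Lie $k$-algebra. $\mathrm{Fit}(A)$ is the ideal of $A$ generated by all elements lying in nilpotent ideals of $A$. *)

(* Defs.v *)
From HB Require Import structures.
From mathcomp Require Import all_boot all_algebra.
From mathcomp.multinomials Require Import monalg.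
Set Implicit Arguments. Unset Strict Implicit. Unset Printing Implicit Defensive.
Import GRing.Theory.
Local Open Scope ring_scope.

(* R = k[x_a : a in Lam]  : monoid algebra of commutative monomials over Lam *)
Definition Rpoly (k : fieldType) (Lam : choiceType) := {malg k[{cmonom Lam}]}.
(* T = free R-module with basis {u_i : i in I} (finitely supported I -> R) *)
Definition Tmod (k : fieldType) (Lam I : choiceType) := {malg (Rpoly k Lam)[I]}.

Section MatrixMetabelian.
Variables (k : fieldType) (Lam I : choiceType).
Local Notation R := (Rpoly k Lam).
Local Notation T := (Tmod k Lam I).

(* elements (f,u) of M_{I,Lam} *)
Definition Mel := (R * T)%type.
Definition mzero : Mel := (0, 0).
Definition madd (p q : Mel) : Mel := (p.1 + q.1, p.2 + q.2).
Definition mscale (c : k) (p : Mel) : Mel := (c *: p.1, (c%:A : R) *: p.2).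
Definition mbr (p q : Mel) : Mel := (0, q.1 *: p.2 - p.1 *: q.2).

Definition subspace (W : Mel -> Prop) : Prop :=
  [/\ W mzero, (forall x y, W x -> W y -> W (madd x y))
    & (forall c x, W x -> W (mscale c x))].

Definition subalgebra (A : Mel -> Prop) : Prop :=
  subspace A /\ (forall x y, A x -> A y -> A (mbr x y)).

Definition non_abelian (A : Mel -> Prop) : Prop :=
  exists x y, [/\ A x, A y & mbr x y <> mzero].

Definition span (S : Mel -> Prop) : Mel -> Prop :=
  fun v => forall W, subspace W -> (forall x, S x -> W x) -> W v.

Definition brack (J K : Mel -> Prop) : Mel -> Prop :=
  span (fun v => exists x y, [/\ J x, K y & v = mbr x y]).

(* lower central series of J: J^1 = J, J^{n+1} = [J, J^n] *)
Fixpoint lcs (J : Mel -> Prop) (n : nat) : Mel -> Prop :=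
  match n with
  | O => J
  | S m => brack J (lcs J m)
  end.

Definition nilpotent (J : Mel -> Prop) : Prop :=
  exists n, forall v, lcs J n v -> v = mzero.

Definition ideal_of (A J : Mel -> Prop) : Prop :=
  [/\ subspace J, (forall x, J x -> A x)
    & (forall a x, A a -> J x -> J (mbr a x))].

Definition Fit (A : Mel -> Prop) : Mel -> Prop :=
  fun v => forall J, ideal_of A J ->
    (forall N x, ideal_of A N -> nilpotent N -> N x -> J x) -> J v.

End MatrixMetabelian.

(* Main.v *)
Require Import Defs.
From HB Require Import structures.
From mathcomp Require Import all_boot all_algebra.
From mathcomp Require Import finmap.
From mathcomp.multinomials Require Import monalg mpoly.
Set Implicit Arguments. Unset Strict Implicit. Unset Printing Implicit Defensive.
Import GRing.Theory.
Local Open Scope ring_scope.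

Section Dom.
Variables (k : fieldType) (Lam : choiceType) (n : nat) (t : n.-tuple Lam).

Definition hm (m : cmonom Lam) : mpoly.multinom n :=
  mpoly.Multinom [tuple m (tnth t i) | i < n].

Definition hX (m : cmonom Lam) : mpoly.mpoly n k := mpoly.mpolyX k (hm m).

Lemma hmE m i : mpoly.fun_of_multinom (hm m) i = m (tnth t i).
Proof. by rewrite /hm mpoly.multinomE tnth_mktuple. Qed.

Lemma hX_mult : @mmorphism (cmonom Lam : monomType) (mpoly.mpoly n k) hX.
Proof.
split.
  move=> m1 m2; rewrite /hX -mpoly.mpolyXD; congr mpoly.mpolyX.
  by apply/mpoly.mnmP => i; rewrite mpoly.mnmDE !hmE mulcmE.
rewrite /hX -(mpoly.mpolyX0 n k); congr mpoly.mpolyX.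
by apply/mpoly.mnmP => i; rewrite mpoly.mnm0E !hmE onecmE.
Qed.

HB.instance Definition _ := isMultiplicative.Build (cmonom Lam) (mpoly.mpoly n k) hX hX_mult.

Definition phi (f : {malg k[cmonom Lam]}) : mpoly.mpoly n k :=
  monalg.mmap (mpoly.mpolyC n (R:=k)) hX f.

Lemma phiM f g : phi (f * g) = phi f * phi g.
Proof. by rewrite /phi rmorphM. Qed.

Lemma phi0 : phi 0 = 0.
Proof. by rewrite /phi raddf0. Qed.

Lemma phi_coeff f M : M \in monalg.msupp f ->
  (forall m, m \in monalg.msupp f -> hm m = hm M -> m = M) ->
  mpoly.mcoeff (hm M) (phi f) = monalg.mcoeff M f.
Proof.
move=> HM inj; rewrite /phi monalg.mmapE raddf_sum /=.
rewrite (bigD1_seq M) //= big1_seq ?addr0.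
  by rewrite /hX mpoly.mcoeffCM mpoly.mcoeffX eqxx mulr1.
move=> m /andP[hmM mf]; rewrite /hX mpoly.mcoeffCM mpoly.mcoeffX.
case: eqP => [E|]; last by rewrite mulr0.
by rewrite (inj _ mf E) eqxx in hmM.
Qed.
Lemma hm_inj (m1 m2 : cmonom Lam) :
  (forall x, x \in finsupp m1 -> x \in t) ->
  (forall x, x \in finsupp m2 -> x \in t) -> hm m1 = hm m2 -> m1 = m2.
Proof.
move=> s1 s2 E; apply/eqP/cmP => x.
case: (boolP (x \in t)) => xt.
  have lt : (index x t < n)%N by rewrite -{2}(size_tuple t) index_mem.
  have Ht : tnth t (Ordinal lt) = x by rewrite (tnth_nth x) /= nth_index.
  by rewrite -Ht -!hmE E.
rewrite !fsfun_dflt //; apply/negP => /[dup].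
  by move/s2; rewrite (negbTE xt).
by move/s1; rewrite (negbTE xt).
Qed.
End Dom.

Lemma Rdom (k : fieldType) (Lam : choiceType) (f g : {malg k[cmonom Lam]}) :
  f != 0 -> g != 0 -> f * g != 0.
Proof.
move=> nf ng.
pose s : seq Lam := flatten [seq (finsupp (cmonom_val m) : seq Lam) |
   m <- (monalg.msupp f : seq _) ++ (monalg.msupp g : seq _)].
pose t := in_tuple s.
have Hs m x : m \in (monalg.msupp f : seq _) ++ (monalg.msupp g : seq _) ->
    x \in finsupp m -> x \in t.
  move=> Hm Hx; apply/flattenP; exists (finsupp (cmonom_val m) : seq Lam) => //.
  by apply/mapP; exists m.
have nz (h : {malg k[cmonom Lam]}) :
    h != 0 -> (forall m, m \in monalg.msupp h ->
       m \in (monalg.msupp f : seq _) ++ (monalg.msupp g : seq _)) ->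
    phi t h != 0.
  move=> nh sub; have : monalg.msupp h != fset0 by rewrite monalg.msupp_eq0.
  case/fset0Pn => M HM.
  apply/eqP => E; move: (phi_coeff (t:=t) HM).
  rewrite E mpoly.mcoeff0 => H.
  suff /H/esym/eqP : forall m, m \in monalg.msupp h -> hm t m = hm t M -> m = M.
    by apply/negP; rewrite monalg.mcoeff_neq0 HM.
  move=> m Hm; apply: hm_inj => x; [exact/Hs/sub|exact/Hs/sub].
have := mulf_neq0 (nz f nf _) (nz g ng _).
rewrite -phiM => H.
have /H : forall m, m \in monalg.msupp f -> m \in (monalg.msupp f : seq _) ++ (monalg.msupp g : seq _).
  by move=> m Hm; rewrite mem_cat Hm.
have /[swap] /[apply] : forall m, m \in monalg.msupp g -> m \in (monalg.msupp f : seq _) ++ (monalg.msupp g : seq _).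
  by move=> m Hm; rewrite mem_cat Hm orbT.
by apply: contraNneq => ->; rewrite phi0.
Qed.

Lemma Tfree (k : fieldType) (Lam I : choiceType) (f : {malg k[cmonom Lam]})
  (w : {malg {malg k[cmonom Lam]}[I]}) : f != 0 -> w != 0 -> f *: w != 0.
Proof.
move=> nf; apply: contraNneq => E; apply/eqP/monalg.malgP => i.
rewrite monalg.mcoeff0; apply/eqP; apply: contraTT nf => ni.
have := congr1 (monalg.mcoeff i) E; rewrite monalg.mcoeffZ monalg.mcoeff0 => /eqP.
move=> H; apply/negP => nf0; by move: (Rdom nf0 ni); rewrite H.
Qed.

Theorem lemma3p1p1 (k : fieldType) (Lam I : choiceType)
    (A : Mel k Lam I -> Prop) :
  subalgebra A -> non_abelian A ->
  forall p : Mel k Lam I, Fit A p <-> (A p /\ p.1 = 0).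
Proof.
move=> [[A0 Aadd Ascale] Abr] [a [b [Aa Ab nab]]] p.
pose Z := fun q : Mel k Lam I => A q /\ q.1 = 0.
have Zsub : subspace Z.
  split.
  - by split.
  - move=> x y [Ax x1] [Ay y1]; split; first exact: Aadd.
    by rewrite /= x1 y1 addr0.
  - move=> c x [Ax x1]; split; first exact: Ascale.
    by rewrite /= x1 scaler0.
have Zid : ideal_of A Z.
  split => //; first by move=> x [].
  by move=> a' x Aa' [Ax _]; split => //; exact: Abr.
split.
- move=> Hp; apply: (Hp Z) => // N x [Nsub NA Nbr] [n Hn] Nx.
  split; first exact: NA.
  apply/eqP; apply/negPn/negP => nf.
  have [w [Nw w1 w2]] : exists w, [/\ N w, w.1 = 0 & w.2 != 0].
    case: (eqVneq (mbr a x).2 0) => Ha; last first.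
      by exists (mbr a x); split => //; exact: Nbr.
    case: (eqVneq (mbr b x).2 0) => Hb; last first.
      by exists (mbr b x); split => //; exact: Nbr.
    exfalso; apply: nab.
    have E0 : x.1 *: (mbr a b).2 = 0.
      move: Ha Hb; rewrite /mbr /= => /eqP; rewrite subr_eq0 => /eqP Ha.
      move/eqP; rewrite subr_eq0 => /eqP Hb.
      rewrite scalerBr.
      have E1 : x.1 *: (b.1 *: a.2) = b.1 *: (x.1 *: a.2).
        rewrite scalerA [RHS]scalerA (mulrC x.1). reflexivity.
      have E2 : x.1 *: (a.1 *: b.2) = a.1 *: (x.1 *: b.2).
        rewrite scalerA [RHS]scalerA (mulrC x.1). reflexivity.
      have F1 := etrans E1 (congr1 (fun v => b.1 *: v) Ha).
      have F2 := etrans E2 (congr1 (fun v => a.1 *: v) Hb).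
      have F3 : b.1 *: (a.1 *: x.2) = a.1 *: (b.1 *: x.2).
        rewrite scalerA [RHS]scalerA. rewrite (mulrC a.1). reflexivity.
      have F4 := etrans F1 (etrans F3 (esym F2)).
      refine (etrans (f_equal (fun v => v - _) F4) _).
      apply: subrr.
    case: (eqVneq (mbr a b).2 0) => [E| ne]; last first.
      exfalso; move: (Tfree nf ne); rewrite E0 eqxx; discriminate.
    rewrite /mbr /mzero. rewrite /mbr /= in E. rewrite E. reflexivity.
  have key : forall j, exists z, [/\ lcs N j z, z.1 = 0 & z.2 != 0].
    elim => [|j [z [Lz z1 z2]]]. exists w; split; [exact: Nw|exact: w1|exact: w2].
    exists (mbr x z); split.
    - move=> W HW HS; apply: HS; exists x, z; split; [exact: Nx|exact: Lz|reflexivity].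
    - reflexivity.
    - rewrite /mbr /= z1 scale0r sub0r oppr_eq0; exact: Tfree.
  have [z [Lz _ z2]] := key n.
  move: z2; rewrite (Hn _ Lz) /= eqxx; discriminate.
- move=> Zp J HJ HN; apply: (HN Z p); [exact: Zid| |exact: Zp].
  exists 1%N => v Hv; apply: (Hv (fun q => q = mzero k Lam I)).
  + split; [reflexivity| |].
    * move=> x y -> ->; rewrite /madd /mzero /= !addr0; reflexivity.
    * move=> c x ->; rewrite /mscale /mzero /= !scaler0; reflexivity.
  + move=> v' [x [y [[_ x1] [_ y1] ->]]].
    rewrite /mbr x1 y1 !scale0r subrr; reflexivity.
Qed.
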